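(* Let $U$ be a finite nonempty set and $R$ an equivalence relation on $U$. Let $\mathbf{S}(R)=\{X\subseteq U \mid R^{*}(X)=U\}$ and let $\mathbf{I}(R)=\{X\subseteq U \mid X\subseteq S \text{ for some inclusion-minimal member } S \text{ of } \mathbf{S}(R)\}$ be the family of independent sets of the support matroid $M(R)=(U,\mathbf{I}(R))$. Then $$\mathbf{I}(R)=\{X\subseteq U \mid \forall x\in U,\ |RN(x)\cap X|\leq 1\}.$$
   Context: For $x\in U$, $RN(x)=\{y\in U\mid xRy\}$ is the equivalence class of $x$. The upper approximation of $X\subseteq U$ is $R^{*}(X)=\{x\in U\mid RN(x)\cap X\neq\emptyset\}$. The support matroid $M(R)$ induced by $R$ is the matroid on $U$ whose independent sets are the subsets of inclusion-minimal members of $\mathbf{S}(R)$; its support sets (subsets of $U$ containing a base, i.e. a maximal independent set) are exactly the members of $\mathbf{S}(R)$. *)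

(* Defs.v *)
From mathcomp Require Import all_boot.
Set Implicit Arguments. Unset Strict Implicit. Unset Printing Implicit Defensive.

Definition RN (U : finType) (R : rel U) (x : U) : {set U} := [set y | R x y].

Definition upper (U : finType) (R : rel U) (X : {set U}) : {set U} :=
  [set x | RN R x :&: X != set0].

Definition suppS (U : finType) (R : rel U) : {set {set U}} :=
  [set X : {set U} | upper R X == [set: U]].

Definition indepI (U : finType) (R : rel U) : {set {set U}} :=
  [set X : {set U} | [exists S : {set U}, minset (fun Y => Y \in suppS R) S && (X \subset S)]].

(* Main.v *)
Require Import Defs.
From mathcomp Require Import all_boot.

Section S.
Variables (U : finType) (R : rel U).
Hypothesis eqR : equivalence_rel R.

Let Rrefl x : R x x. Proof. exact: (eqR x x x).1. Qed.
Let Rsym x y : R x y -> R y x.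
Proof. by move=> h; rewrite -((eqR x y x).2 h) Rrefl. Qed.
Let Rtrans x y z : R x y -> R y z -> R x z.
Proof. by move=> h; rewrite ((eqR x y z).2 h). Qed.

Lemma suppP (S : {set U}) : reflect (forall x, exists2 y, y \in S & R x y) (S \in suppS R).
Proof.
rewrite inE /upper; apply: (iffP eqP) => [h x | h].
  have : x \in [set x | RN R x :&: S != set0] by rewrite h inE.
  rewrite inE => /set0Pn [y]; rewrite !inE => /andP[Ry yS]; by exists y.
apply/setP => x; rewrite !inE; case: (h x) => y yS Ry.
by apply/set0Pn; exists y; rewrite !inE Ry yS.
Qed.

Lemma supp_up (S T : {set U}) : S \subset T -> S \in suppS R -> T \in suppS R.
Proof.
move=> sST /suppP h; apply/suppP => x; case: (h x) => y yS Ry.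
by exists y => //; apply: (subsetP sST).
Qed.

Lemma supp_del (S : {set U}) t z : S \in suppS R -> z \in S -> z != t -> R t z ->
  S :\ t \in suppS R.
Proof.
move=> /suppP h zS zt Rtz; apply/suppP => w; case: (h w) => u uS Rwu.
case: (eqVneq u t) => [ut | ut].
  subst u; exists z; first by rewrite !inE zt zS.
  exact: Rtrans Rwu Rtz.
by exists u => //; rewrite !inE ut uS.
Qed.

Lemma card_le1P (A : {set U}) :
  reflect (forall y z, y \in A -> z \in A -> y = z) (#|A| <= 1).
Proof.
apply: (iffP idP) => [h y z yA zA | h].
  apply/eqP; apply: contraLR h => yz; rewrite -ltnNge.
  have -> : 1 = #|[set y]| by rewrite cards1.
  apply: proper_card; rewrite properEneq; apply/andP; split.
    apply/eqP => e; move: zA; rewrite -e inE eq_sym => /eqP zy.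
    by move: yz; rewrite zy eqxx.
  by rewrite sub1set.
case: (set_0Vmem A) => [-> | [y yA]]; first by rewrite cards0.
have -> : A = [set y]; last by rewrite cards1.
by apply/setP => z; rewrite inE; apply/idP/eqP => [zA | ->]; [exact: h|].
Qed.

End S.

Theorem theorem1 (U : finType) (R : rel U) :
  0 < #|U| -> equivalence_rel R ->
  indepI R = [set X : {set U} | [forall x : U, #|RN R x :&: X| <= 1]].
Proof.
move=> _ eqR.
have Rrefl x : R x x by exact: (eqR x x x).1.
have Rsym x y : R x y -> R y x.
  by move=> h; rewrite -((eqR x y x).2 h) Rrefl.
have Rtrans x y z : R x y -> R y z -> R x z.
  by move=> h; rewrite ((eqR x y z).2 h).
apply/setP => X; rewrite !inE; apply/idP/idP.
- case/existsP => S /andP[/minsetP[Ssupp Smin] XS].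
  apply/forallP => x; apply/card_le1P => y z.
  rewrite !inE => /andP[Rxy yX] /andP[Rxz zX].
  apply/eqP; apply/negP => /negP yz.
  have yS := subsetP XS y yX; have zS := subsetP XS z zX.
  have h : S :\ y \in suppS R.
    apply: (@supp_del U R eqR S y z Ssupp zS); first by rewrite eq_sym.
    exact: Rtrans (Rsym _ _ Rxy) Rxz.
  have := Smin _ h (subsetDl _ _) => e.
  by move: yS; rewrite -e !inE eqxx.
- move=> /forallP hX.
  pose P := fun Y : {set U} => (Y \in suppS R) && (X \subset Y).
  have PT : P setT.
    rewrite /P subsetT andbT; apply/(@suppP U R _) => x; by exists x; rewrite ?inE.
  case: (minset_exists PT) => S /minsetP[/andP[Ssupp XS] Smin] _.
  apply/existsP; exists S; rewrite XS andbT.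
  apply/minsetP; split => // T Tsupp0 TS; have Tsupp : T \in suppS R := Tsupp0.
  apply/eqP; rewrite eqEsubset TS /=; apply/subsetP => y yS.
  apply/negPn/negP => yT.
  have [t [tS tX htS]] : exists t, [/\ t \in S, t \notin X & S :\ t \in suppS R].
    case yX: (y \in X); last first.
      exists y; split => //; first by rewrite yX.
      apply: (@supp_up U R T (S :\ y) _ Tsupp); apply/subsetP => w wT.
      rewrite !inE (subsetP TS w wT) andbT; apply/eqP => e; subst w.
      by rewrite wT in yT.
    move/(@suppP U R T): (Tsupp) => /(_ y) [t tT Ryt].
    have ty : t != y by apply/eqP => e; subst t; rewrite tT in yT.
    have tS := subsetP TS t tT.
    exists t; split => //.
      apply/negP => tX; move/card_le1P: (hX y) => /(_ y t).
      rewrite !inE Rrefl yX Ryt tX => /(_ isT isT) e.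
      by rewrite e eqxx in ty.
    apply: (@supp_del U R eqR S t y Ssupp yS); first by rewrite eq_sym.
    exact: Rsym.
  have := Smin (S :\ t); rewrite /P htS /= => /(_ _ (subsetDl _ _)).
  have -> : X \subset S :\ t.
    apply/subsetP => w wX; rewrite !inE (subsetP XS w wX) andbT.
    by apply/eqP => e; subst w; rewrite wX in tX.
  by move=> /(_ isT) e; move: tS; rewrite -e !inE eqxx.
Qed.
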